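(* Let $\nu\in\mathbb{C}$ and $\mathrm{Re}(x)<\mathrm{Re}(\nu)$. Let $U$ be a Hankel-type contour in the $t$-plane that starts at $+\infty$ above the real axis, circles the origin counterclockwise, and returns to $+\infty$ below the real axis, such that $t^{-\nu}\big[\frac12(t-\frac1t)+1\big]^x$ vanishes at the endpoints of $U$. Define \[ y_\nu(x)=\int_U t^{-\nu-1}\Big[\frac12\Big(t-\frac1t\Big)+1\Big]^x\,dt . \] Then (i) $y_\nu$ satisfies the delay-difference equations \[ x\,\Delta y_\nu(x-1)+\nu y_\nu(x)-x\,y_{\nu-1}(x-1)=0,\qquad x\,\Delta y_\nu(x-1)-\nu y_\nu(x)+x\,y_{\nu+1}(x-1)=0; \] (ii) $y_\nu$ solves the difference Bessel equation of order $\nu$: \[ x(x-1)\Delta^2y(x-2)+x\Delta y(x-1)+x(x-1)y(x-2)-\nu^2y(x)=0 . \]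
   Context: $\Delta$ is the forward difference operator: $\Delta g(x)=g(x+1)-g(x)$, so $\Delta g(x-1)=g(x)-g(x-1)$ and $\Delta^2g=\Delta(\Delta g)$. *)

(* Defs.v *)
From Stdlib Require Import Reals.
From Coquelicot Require Import Coquelicot.

Open Scope C_scope.

Definition cexp (z : C) : C :=
  (exp (Re z) * cos (Im z), exp (Re z) * sin (Im z))%R.

Definition cint (f : R -> C) : C :=
  (RInt_gen (fun s => Re (f s)) (Rbar_locally m_infty) (Rbar_locally p_infty),
   RInt_gen (fun s => Im (f s)) (Rbar_locally m_infty) (Rbar_locally p_infty)).

Definition ex_cint (f : R -> C) : Prop :=
  ex_RInt_gen (fun s => Re (f s)) (Rbar_locally m_infty) (Rbar_locally p_infty) /\
  ex_RInt_gen (fun s => Im (f s)) (Rbar_locally m_infty) (Rbar_locally p_infty).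

(* The contour U is parametrized by gamma : R -> C with derivative dgamma.
   L1 s is a continuous logarithm of t = gamma s along U, so t^a := cexp (a * L1 s);
   L2 s is a continuous logarithm of (1/2)(t - 1/t) + 1 along U,
   so [(1/2)(t - 1/t) + 1]^x := cexp (x * L2 s). *)
Definition hankel_integrand (dgamma L1 L2 : R -> C) (nu x : C) (s : R) : C :=
  cexp ((- nu - 1) * L1 s) * cexp (x * L2 s) * dgamma s.

Definition hankel_y (dgamma L1 L2 : R -> C) (nu x : C) : C :=
  cint (hankel_integrand dgamma L1 L2 nu x).

Definition fwd_diff (g : C -> C) (z : C) : C := g (z + 1) - g z.

(* Main.v *)
Require Import Defs.
From Stdlib Require Import Reals Lra.
From Coquelicot Require Import Coquelicot.
Open Scope C_scope.

Definition CD (f : R -> C) (s : R) (l : C) :=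
  is_derive (fun u => Re (f u)) s (Re l) /\ is_derive (fun u => Im (f u)) s (Im l).

Lemma isd_eq (f : R -> R) s l l' : is_derive f s l -> l = l' -> is_derive f s l'.
Proof. intros H ->; exact H. Qed.


Lemma isd_plus (f g : R -> R) s a b : is_derive f s a -> is_derive g s b ->
  is_derive (fun u => f u + g u)%R s (a + b)%R.
Proof. intros. exact (is_derive_plus f g s a b H H0). Qed.
Lemma isd_minus (f g : R -> R) s a b : is_derive f s a -> is_derive g s b ->
  is_derive (fun u => f u - g u)%R s (a - b)%R.
Proof. intros. exact (is_derive_minus f g s a b H H0). Qed.
Lemma isd_opp (f : R -> R) s a : is_derive f s a ->
  is_derive (fun u => - f u)%R s (- a)%R.
Proof. intros. exact (is_derive_opp f s a H). Qed.
Lemma isd_mult (f g : R -> R) s a b : is_derive f s a -> is_derive g s b ->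
  is_derive (fun u => f u * g u)%R s (a * g s + f s * b)%R.
Proof. intros. exact (is_derive_mult f g s a b H H0 (fun x y => Rmult_comm x y)). Qed.
Lemma isd_comp (f g : R -> R) s a b : is_derive f (g s) a -> is_derive g s b ->
  is_derive (fun u => f (g u)) s (b * a)%R.
Proof. intros. exact (is_derive_comp f g s a b H H0). Qed.
Lemma isd_const (c : R) s : is_derive (fun _ => c) s 0%R.
Proof. exact (is_derive_const (K:=R_AbsRing) (V:=R_NormedModule) c s). Qed.
Lemma isd_id s : is_derive (fun u : R => u) s 1%R.
Proof. exact (is_derive_id (K:=R_AbsRing) s). Qed.

Lemma C_ext (a b : C) : Re a = Re b -> Im a = Im b -> a = b.
Proof. destruct a, b; simpl; intros; subst; reflexivity. Qed.

Ltac clean := unfold plus, mult, minus, opp, scal, zero, one, Re, Im; simpl.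

Lemma CD_plus f g s a b : CD f s a -> CD g s b -> CD (fun u => f u + g u) s (a + b).
Proof.
  intros [Ha1 Ha2] [Hb1 Hb2]; split.
  - eapply is_derive_ext; [intro; reflexivity|]. simpl. exact (is_derive_plus _ _ _ _ _ Ha1 Hb1).
  - eapply is_derive_ext; [intro; reflexivity|]. simpl. exact (is_derive_plus _ _ _ _ _ Ha2 Hb2).
Qed.

Lemma CD_const c s : CD (fun _ => c) s 0.
Proof. split; apply isd_const. Qed.

Lemma CD_mult f g s a b : CD f s a -> CD g s b ->
  CD (fun u => f u * g u) s (a * g s + f s * b).
Proof.
  intros [Ha1 Ha2] [Hb1 Hb2]; split.
  - eapply is_derive_ext; [intro; reflexivity|]. simpl.
    eapply isd_eq.
    + apply isd_minus; apply isd_mult; [exact Ha1|exact Hb1|exact Ha2|exact Hb2].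
    + clean. ring.
  - eapply is_derive_ext; [intro; reflexivity|]. simpl.
    eapply isd_eq.
    + apply isd_plus; apply isd_mult; [exact Ha1|exact Hb2|exact Ha2|exact Hb1].
    + clean. ring.
Qed.

Lemma CD_inv f s a : CD f s a -> f s <> 0 -> CD (fun u => / f u) s (- a / (f s * f s)).
Proof.
  intros [Ha1 Ha2] Hn.
  assert (Hn' : (Re (f s) ^ 2 + Im (f s) ^ 2 <> 0)%R).
  { intro H. apply Hn. destruct (f s) as [p q]; simpl in *. assert (p = 0 /\ q = 0)%R as [-> ->]. { split; nra. } reflexivity. }
  split.
  - eapply is_derive_ext; [intro; reflexivity|]. simpl.
    eapply isd_eq.
    + Timeout 10 apply is_derive_div.
      * exact Ha1.
      * apply (isd_plus (fun u => Re (f u) ^ 2)%R (fun u => Im (f u) ^ 2)%R); [apply (is_derive_pow (fun u => Re (f u)) 2); exact Ha1|apply (is_derive_pow (fun u => Im (f u)) 2); exact Ha2].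
      * exact Hn'.
    + destruct a as [a1 a2]. destruct (f s) as [p q]. unfold Cdiv. clean. simpl in Hn'.
      assert (E: ((p*p-q*q)*((p*p-q*q)*1) + (p*q+q*p)*((p*q+q*p)*1) = (p*(p*1)+q*(q*1))*(p*(p*1)+q*(q*1)))%R) by ring.
      rewrite E. field. contradict Hn'. rewrite <- Hn'. ring.
  - eapply is_derive_ext; [intro; reflexivity|]. simpl.
    eapply isd_eq.
    + apply is_derive_div.
      * apply isd_opp; exact Ha2.
      * apply (isd_plus (fun u => Re (f u) ^ 2)%R (fun u => Im (f u) ^ 2)%R); [apply (is_derive_pow (fun u => Re (f u)) 2); exact Ha1|apply (is_derive_pow (fun u => Im (f u)) 2); exact Ha2].
      * exact Hn'.
    + destruct a as [a1 a2]. destruct (f s) as [p q]. unfold Cdiv. clean. simpl in Hn'.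
      assert (E: ((p*p-q*q)*((p*p-q*q)*1) + (p*q+q*p)*((p*q+q*p)*1) = (p*(p*1)+q*(q*1))*(p*(p*1)+q*(q*1)))%R) by ring.
      rewrite E. field. contradict Hn'. rewrite <- Hn'. ring.
Qed.
Lemma CD_cexp A s a : CD A s a -> CD (fun u => cexp (A u)) s (cexp (A s) * a).
Proof.
  intros [Ha1 Ha2]; unfold cexp; split; simpl.
  - eapply isd_eq.
    + apply isd_mult.
      * apply (isd_comp exp (fun u => Re (A u))); [apply is_derive_exp | exact Ha1].
      * apply (isd_comp cos (fun u => Im (A u))); [apply is_derive_cos | exact Ha2].
    + clean. ring.
  - eapply isd_eq.
    + apply isd_mult.
      * apply (isd_comp exp (fun u => Re (A u))); [apply is_derive_exp | exact Ha1].
      * apply (isd_comp sin (fun u => Im (A u))); [apply is_derive_sin | exact Ha2].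
    + clean. ring.
Qed.

Lemma isd_asin0 : is_derive asin 0%R 1%R.
Proof.
  assert (H : (-1 < 0 < 1)%R) by lra.
  apply is_derive_Reals. apply (derive_pt_eq_1 _ _ _ (derivable_pt_asin 0 H)).
  rewrite derive_pt_asin. rewrite Rsqr_0, Rminus_0_r, sqrt_1. field.
Qed.

Lemma isd_ln (f : R -> R) s a : is_derive f s a -> (0 < f s)%R ->
  is_derive (fun u => ln (f u)) s (a * / f s)%R.
Proof.
  intros H Hp. apply (isd_comp ln f s (/ f s)%R a); auto.
  apply is_derive_Reals. apply derivable_pt_lim_ln. exact Hp.
Qed.

Lemma CD_log (g L : R -> C) s d : (forall u, cexp (L u) = g u) ->
  continuous (fun u => Im (L u)) s -> CD g s d -> CD L s (d / g s).
Proof.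
  intros HL Hc [Hd1 Hd2].
  assert (HN : forall u, (Re (g u) ^ 2 + Im (g u) ^ 2 = exp (Re (L u)) * exp (Re (L u)))%R).
  { intro u. rewrite <- HL. unfold cexp, Re, Im; simpl.
    pose proof (sin2_cos2 (snd (L u))). unfold Rsqr in H.
    transitivity (exp (fst (L u)) * exp (fst (L u)) * (sin (snd (L u)) * sin (snd (L u)) + cos (snd (L u)) * cos (snd (L u))))%R; [ring|]. rewrite H; ring. }
  assert (HNp : forall u, (0 < Re (g u) ^ 2 + Im (g u) ^ 2)%R).
  { intro u. rewrite HN. pose proof (exp_pos (Re (L u))). nra. }
  assert (HRe : is_derive (fun u => Re (L u)) s (Re (d / g s))).
  { eapply is_derive_ext.
    { intro u. symmetry. instantiate (1 := fun u => (/2 * ln (Re (g u) ^ 2 + Im (g u) ^ 2))%R). cbv beta.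
      change (Re (L u) = /2 * ln (Re (g u) ^ 2 + Im (g u) ^ 2))%R.
      rewrite HN, <- exp_plus, ln_exp. field. }
    eapply isd_eq.
    - apply is_derive_scal. apply isd_ln; [|apply HNp].
      apply (isd_plus (fun u => Re (g u) ^ 2)%R (fun u => Im (g u) ^ 2)%R);
        [apply (is_derive_pow (fun u => Re (g u)) 2); exact Hd1
        |apply (is_derive_pow (fun u => Im (g u)) 2); exact Hd2].
    - pose proof (HNp s). destruct d as [d1 d2]. unfold Cdiv. simpl in *.
      destruct (g s) as [p q]. simpl in *. field. lra. }
  split; [exact HRe|].
  set (th0 := Im (L s)).
  set (phi := fun u => ((Im (g u) * cos th0 - Re (g u) * sin th0) * exp (- Re (L u)))%R).
  assert (Hphi : forall u, phi u = sin (Im (L u) - th0)).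
  { intro u. unfold phi. rewrite <- HL. unfold cexp; simpl. rewrite sin_minus, exp_Ropp.
    field. apply Rgt_not_eq, exp_pos. }
  apply (is_derive_ext_loc (fun u => th0 + asin (phi u))%R).
  { assert (Hloc : locally s (fun u => ball th0 (PI/2) (Im (L u)))).
    { apply Hc. apply (locally_ball th0 (mkposreal _ PI2_RGT_0)). }
    revert Hloc; apply filter_imp; intros u Hu.
    change (Rabs (Im (L u) - th0) < PI / 2)%R in Hu.
    change (th0 + asin (phi u) = Im (L u))%R. rewrite Hphi, asin_sin. ring. apply Rabs_def2 in Hu. lra. }
  eapply isd_eq.
  - apply (isd_plus (fun _ => th0) (fun u => asin (phi u))). apply isd_const. apply (isd_comp asin phi).
    + rewrite Hphi. unfold th0. rewrite Rminus_diag, sin_0. apply isd_asin0.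
    + unfold phi. apply (isd_mult (fun u => Im (g u) * cos th0 - Re (g u) * sin th0)%R (fun u => exp (- Re (L u)))%R).
      * apply (isd_minus (fun u => Im (g u) * cos th0)%R (fun u => Re (g u) * sin th0)%R).
        -- apply (isd_mult (fun u => Im (g u)) (fun _ => cos th0)). exact Hd2. apply isd_const.
        -- apply (isd_mult (fun u => Re (g u)) (fun _ => sin th0)). exact Hd1. apply isd_const.
      * apply (isd_comp exp (fun u => - Re (L u))%R). apply is_derive_exp. apply isd_opp. exact HRe.
  - unfold th0. clear Hphi phi Hc. pose proof (HL s) as E. rewrite <- E.
    pose proof (exp_pos (Re (L s))). pose proof (sin2_cos2 (Im (L s))). unfold Rsqr in *.
    destruct d as [d1 d2]. unfold Cdiv, cexp. clean. rewrite exp_Ropp.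
    destruct (L s) as [l t]. simpl in *.
    assert (EE : (exp l * cos t * (exp l * cos t * 1) + exp l * sin t * (exp l * sin t * 1) = exp l * exp l)%R).
    { transitivity (exp l * exp l * (sin t * sin t + cos t * cos t))%R; [ring|]. rewrite H0; ring. }
    rewrite EE. field. lra.
Qed.

Definition CC (f : R -> C) (s : R) :=
  continuous (fun u => Re (f u)) s /\ continuous (fun u => Im (f u)) s.

Lemma cont_plus (f g : R -> R) s : continuous f s -> continuous g s -> continuous (fun u => f u + g u)%R s.
Proof. intros. exact (continuous_plus f g s H H0). Qed.
Lemma cont_minus (f g : R -> R) s : continuous f s -> continuous g s -> continuous (fun u => f u - g u)%R s.
Proof. intros. exact (continuous_minus f g s H H0). Qed.
Lemma cont_mult (f g : R -> R) s : continuous f s -> continuous g s -> continuous (fun u => f u * g u)%R s.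
Proof. intros. exact (continuous_mult f g s H H0). Qed.
Lemma cont_const (c : R) s : continuous (fun _ : R => c) s.
Proof. exact (continuous_const (U:=R_UniformSpace) c s). Qed.
Lemma cont_comp (f g : R -> R) s : continuous g s -> continuous f (g s) -> continuous (fun u => f (g u)) s.
Proof. intros. exact (continuous_comp g f s H H0). Qed.
Lemma cont_of_der (f : R -> R) s : (exists l, is_derive f s l) -> continuous f s.
Proof. intros [l H]. apply (ex_derive_continuous (K:=R_AbsRing) (V:=R_NormedModule)). exists l. exact H. Qed.

Lemma CC_of_cont f s : continuous f s -> CC f s.
Proof.
  intro H. split.
  - apply (continuous_comp f fst s H). destruct (f s). apply continuous_fst.
  - apply (continuous_comp f snd s H). destruct (f s). apply continuous_snd.
Qed.

Lemma CC_plus f g s : CC f s -> CC g s -> CC (fun u => f u + g u) s.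
Proof. intros [A B] [C1 D1]; split; simpl; apply cont_plus; auto. Qed.

Lemma CC_mult f g s : CC f s -> CC g s -> CC (fun u => f u * g u) s.
Proof. intros [A B] [C1 D1]; split; simpl.
  - apply (cont_minus (fun u => Re (f u) * Re (g u))%R (fun u => Im (f u) * Im (g u))%R); apply cont_mult; auto.
  - apply (cont_plus (fun u => Re (f u) * Im (g u))%R (fun u => Im (f u) * Re (g u))%R); apply cont_mult; auto.
Qed.

Lemma CC_const c s : CC (fun _ => c) s.
Proof. split; apply cont_const. Qed.

Lemma CC_cexp A s : CC A s -> CC (fun u => cexp (A u)) s.
Proof.
  intros [A1 A2]; unfold cexp; split; simpl.
  - apply (cont_mult (fun u => exp (Re (A u))) (fun u => cos (Im (A u)))).
    + apply (cont_comp exp (fun u => Re (A u))); auto. apply cont_of_der. eexists; apply is_derive_exp.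
    + apply (cont_comp cos (fun u => Im (A u))); auto. apply cont_of_der. eexists; apply is_derive_cos.
  - apply (cont_mult (fun u => exp (Re (A u))) (fun u => sin (Im (A u)))).
    + apply (cont_comp exp (fun u => Re (A u))); auto. apply cont_of_der. eexists; apply is_derive_exp.
    + apply (cont_comp sin (fun u => Im (A u))); auto. apply cont_of_der. eexists; apply is_derive_sin.
Qed.

Lemma ftc_gen (F f : R -> R) :
  (forall s, is_derive F s (f s)) -> (forall s, continuous f s) ->
  filterlim F (Rbar_locally m_infty) (locally 0%R) ->
  filterlim F (Rbar_locally p_infty) (locally 0%R) ->
  is_RInt_gen f (Rbar_locally m_infty) (Rbar_locally p_infty) 0%R.
Proof.
  intros Hd Hc Hm Hp.
  assert (E : forall s, Derive F s = f s) by (intro s; apply is_derive_unique, Hd).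
  apply (is_RInt_gen_ext (Derive F)).
  { apply filter_forall. intros ab x _. apply E. }
  replace 0%R with (0 - 0)%R by ring.
  apply is_RInt_gen_Derive; auto.
  - apply filter_forall. intros ab x _. eexists; apply Hd.
  - apply filter_forall. intros ab x _. apply (continuous_ext f); [intro; symmetry; apply E|apply Hc].
Qed.

Definition is_cint (f : R -> C) (l : C) :=
  is_RInt_gen (fun s => Re (f s)) (Rbar_locally m_infty) (Rbar_locally p_infty) (Re l) /\
  is_RInt_gen (fun s => Im (f s)) (Rbar_locally m_infty) (Rbar_locally p_infty) (Im l).

Lemma cint_correct f : ex_cint f -> is_cint f (cint f).
Proof.
  intros [H1 H2]; split; unfold cint; simpl; apply (RInt_gen_correct (V:=R_CompleteNormedModule)); auto.
Qed.

Lemma isRg_unique (f : R -> R) a b :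
  is_RInt_gen f (Rbar_locally m_infty) (Rbar_locally p_infty) a ->
  is_RInt_gen f (Rbar_locally m_infty) (Rbar_locally p_infty) b -> a = b.
Proof.
  intros Ha Hb. apply (is_RInt_gen_unique (V:=R_CompleteNormedModule)) in Ha.
  apply (is_RInt_gen_unique (V:=R_CompleteNormedModule)) in Hb. congruence.
Qed.

Lemma is_cint_unique f a b : is_cint f a -> is_cint f b -> a = b.
Proof.
  intros [A1 A2] [B1 B2]. apply C_ext; eapply isRg_unique; eauto.
Qed.

Lemma isRg_ext (f g : R -> R) l : (forall s, f s = g s) ->
  is_RInt_gen f (Rbar_locally m_infty) (Rbar_locally p_infty) l ->
  is_RInt_gen g (Rbar_locally m_infty) (Rbar_locally p_infty) l.
Proof. intros E H. apply (is_RInt_gen_ext f); auto. apply filter_forall. intros; apply E. Qed.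

Lemma isRg_plus (f g : R -> R) a b :
  is_RInt_gen f (Rbar_locally m_infty) (Rbar_locally p_infty) a ->
  is_RInt_gen g (Rbar_locally m_infty) (Rbar_locally p_infty) b ->
  is_RInt_gen (fun s => f s + g s)%R (Rbar_locally m_infty) (Rbar_locally p_infty) (a + b)%R.
Proof. intros. exact (is_RInt_gen_plus f g a b H H0). Qed.

Lemma isRg_minus (f g : R -> R) a b :
  is_RInt_gen f (Rbar_locally m_infty) (Rbar_locally p_infty) a ->
  is_RInt_gen g (Rbar_locally m_infty) (Rbar_locally p_infty) b ->
  is_RInt_gen (fun s => f s - g s)%R (Rbar_locally m_infty) (Rbar_locally p_infty) (a - b)%R.
Proof. intros. exact (is_RInt_gen_minus f g a b H H0). Qed.

Lemma isRg_scal (f : R -> R) k a :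
  is_RInt_gen f (Rbar_locally m_infty) (Rbar_locally p_infty) a ->
  is_RInt_gen (fun s => k * f s)%R (Rbar_locally m_infty) (Rbar_locally p_infty) (k * a)%R.
Proof. intros. exact (is_RInt_gen_scal f k a H). Qed.

Lemma is_cint_plus f g a b : is_cint f a -> is_cint g b -> is_cint (fun s => f s + g s) (a + b).
Proof. intros [A1 A2] [B1 B2]; split; simpl; apply isRg_plus; auto. Qed.

Lemma is_cint_scal c f a : is_cint f a -> is_cint (fun s => c * f s) (c * a).
Proof.
  intros [A1 A2]; split; simpl.
  - apply (isRg_minus (fun s => fst c * Re (f s))%R (fun s => snd c * Im (f s))%R); apply isRg_scal; auto.
  - apply (isRg_plus (fun s => fst c * Im (f s))%R (fun s => snd c * Re (f s))%R); apply isRg_scal; auto.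
Qed.

Lemma is_cint_ext f g a : (forall s, f s = g s) -> is_cint f a -> is_cint g a.
Proof. intros E [A1 A2]; split; [apply (isRg_ext (fun s => Re (f s))) | apply (isRg_ext (fun s => Im (f s)))]; auto; intro s; rewrite E; reflexivity. Qed.

Lemma lin4 (f1 f2 f3 f4 h : R -> C) (c1 c2 c3 c4 : C) :
  ex_cint f1 -> ex_cint f2 -> ex_cint f3 -> ex_cint f4 ->
  (forall s, c1 * f1 s + c2 * f2 s + c3 * f3 s + c4 * f4 s = h s) ->
  is_cint h 0 ->
  c1 * cint f1 + c2 * cint f2 + c3 * cint f3 + c4 * cint f4 = 0.
Proof.
  intros H1 H2 H3 H4 E Hh.
  apply (is_cint_unique h); auto.
  apply (is_cint_ext _ _ _ E).
  repeat apply is_cint_plus; apply is_cint_scal; apply cint_correct; auto.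
Qed.

Lemma cexp_add a b : cexp (a + b) = cexp a * cexp b.
Proof.
  destruct a as [a1 a2], b as [b1 b2]; unfold cexp; simpl.
  rewrite exp_plus, cos_plus, sin_plus. apply C_ext; simpl; ring.
Qed.

Lemma cexp_0 : cexp 0 = 1.
Proof. unfold cexp; simpl. rewrite exp_0, cos_0, sin_0. apply C_ext; simpl; ring. Qed.

Lemma cexp_neq0 z : cexp z <> 0.
Proof.
  destruct z as [a b]; unfold cexp; simpl. intro H. injection H as H1 H2.
  pose proof (exp_pos a). pose proof (sin2_cos2 b).
  assert (cos b = 0)%R by (apply Rmult_eq_reg_l with (exp a); lra).
  assert (sin b = 0)%R by (apply Rmult_eq_reg_l with (exp a); lra).
  unfold Rsqr in *. rewrite H3, H4 in H0. lra.
Qed.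

Lemma cexp_opp z : cexp (- z) = / cexp z.
Proof.
  assert (cexp z * cexp (-z) = 1).
  { rewrite <- cexp_add. replace (z + - z) with (RtoC 0) by ring. apply cexp_0. }
  pose proof (cexp_neq0 z). field_simplify_eq; auto. rewrite <- H. ring.
Qed.



Lemma CD_eq f s l l' : CD f s l -> l = l' -> CD f s l'.
Proof. intros H ->; exact H. Qed.

Lemma CD_ext f g s l : (forall u, f u = g u) -> CD f s l -> CD g s l.
Proof. intros E [A B]; split; [apply (is_derive_ext (fun u => Re (f u))) | apply (is_derive_ext (fun u => Im (f u)))]; auto; intro u; rewrite E; reflexivity. Qed.

Lemma CD_cmult c f s l : CD f s l -> CD (fun u => c * f u) s (c * l).
Proof. intro H. eapply CD_eq. apply (CD_mult (fun _ => c) f s 0 l); auto. apply CD_const. ring. Qed.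

Lemma CD_minus f g s a b : CD f s a -> CD g s b -> CD (fun u => f u - g u) s (a - b).
Proof.
  intros Ha Hb. eapply CD_ext; [|eapply CD_eq; [apply (CD_plus f (fun u => -1 * g u)); [exact Ha| apply CD_cmult; exact Hb]|]].
  intro u. simpl. ring. ring.
Qed.

Lemma cexp_split c d e z : c = d + e -> cexp (c * z) = cexp (d * z) * cexp (e * z).
Proof. intros ->. rewrite <- cexp_add. f_equal. ring. Qed.

Lemma cexp_1 z : cexp (1 * z) = cexp z.
Proof. f_equal. ring. Qed.

Lemma cexp_m1 z : cexp (-1 * z) = / cexp z.
Proof. rewrite <- cexp_opp. f_equal. ring. Qed.

Lemma shift_pt a b (l1 l2 g D : C) : cexp l1 = g -> cexp l2 = /2*(g - /g)+1 ->
  1 * (cexp((-a-1)*l1) * cexp(b*l2) * D) + -1 * (cexp((-a-1)*l1)*cexp((b-1)*l2)*D)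
  + - /2 * (cexp((-(a-1)-1)*l1) * cexp((b-1)*l2) * D)
  + /2 * (cexp((-(a+1)-1)*l1)*cexp((b-1)*l2)*D) = 0.
Proof.
  intros H1 H2.
  assert (Hg : g <> 0) by (rewrite <- H1; apply cexp_neq0).
  rewrite (cexp_split b (b-1) 1 l2) by ring.
  rewrite (cexp_split (-(a-1)-1) (-a-1) 1 l1) by ring.
  rewrite (cexp_split (-(a+1)-1) (-a-1) (-1) l1) by ring.
  rewrite cexp_1, cexp_1, cexp_m1, H1, H2. field. exact Hg.
Qed.

Lemma ibp_pt a b (l1 l2 g D : C) : cexp l1 = g -> cexp l2 = /2*(g - /g)+1 ->
  cexp(-a*l1 + b*l2) * (-a * (D/g) + b * ((/2*(D - (-D/(g*g)))) / (/2*(g - /g)+1)))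
  = -a * (cexp((-a-1)*l1) * cexp(b*l2) * D)
    + b/2 * (cexp((-(a-1)-1)*l1) * cexp((b-1)*l2)*D)
    + b/2 * (cexp((-(a+1)-1)*l1)*cexp((b-1)*l2)*D)
    + 0 * (cexp((-a-1)*l1) * cexp(b*l2) * D).
Proof.
  intros H1 H2.
  assert (Hg : g <> 0) by (rewrite <- H1; apply cexp_neq0).
  assert (Hw : /2*(g - /g)+1 <> 0) by (rewrite <- H2; apply cexp_neq0).
  rewrite cexp_add.
  rewrite (cexp_split b (b-1) 1 l2) by ring.
  rewrite (cexp_split (-a-1) (-a) (-1) l1) by ring.
  rewrite (cexp_split (-(a-1)-1) (-a) 0 l1) by ring.
  rewrite (cexp_split (-(a+1)-1) (-a) (-2) l1) by ring.
  rewrite (cexp_split (-2) (-1) (-1) l1) by ring.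
  replace (0 * l1) with (RtoC 0) by ring. rewrite cexp_0.
  rewrite cexp_1, !cexp_m1, H1, H2. field. split; auto.
  intro E; apply Hw. replace (/2*(g - /g)+1) with ((g*g-1+2*g) / (2*g)) by (field; auto). rewrite E. field. auto.
Qed.

Lemma lim_re (f : R -> C) F {FF : Filter F} :
  filterlim f F (locally (RtoC 0)) -> filterlim (fun s => Re (f s)) F (locally 0%R).
Proof. intro H. eapply filterlim_comp; [exact H|]. exact (continuous_fst (U:=R_UniformSpace) (V:=R_UniformSpace) 0%R 0%R). Qed.

Lemma lim_im (f : R -> C) F {FF : Filter F} :
  filterlim f F (locally (RtoC 0)) -> filterlim (fun s => Im (f s)) F (locally 0%R).
Proof. intro H. eapply filterlim_comp; [exact H|]. exact (continuous_snd (U:=R_UniformSpace) (V:=R_UniformSpace) 0%R 0%R). Qed.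

Lemma is_cint_zero : is_cint (fun _ => 0) 0.
Proof.
  split; simpl; apply (ftc_gen (fun _ => 0%R)); intros; try apply isd_const; try apply cont_const;
  apply filterlim_const.
Qed.

Lemma shift_lem (gamma dgamma L1 L2 : R -> C) a b a1 a2 b1 :
  (forall s, cexp (L1 s) = gamma s) ->
  (forall s, cexp (L2 s) = /2 * (gamma s - / gamma s) + 1) ->
  a1 = a - 1 -> a2 = a + 1 -> b1 = b - 1 ->
  ex_cint (hankel_integrand dgamma L1 L2 a b) -> ex_cint (hankel_integrand dgamma L1 L2 a b1) ->
  ex_cint (hankel_integrand dgamma L1 L2 a1 b1) -> ex_cint (hankel_integrand dgamma L1 L2 a2 b1) ->
  1 * hankel_y dgamma L1 L2 a b + -1 * hankel_y dgamma L1 L2 a b1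
  + - /2 * hankel_y dgamma L1 L2 a1 b1 + /2 * hankel_y dgamma L1 L2 a2 b1 = 0.
Proof.
  intros H1 H2 -> -> -> E1 E2 E3 E4. unfold hankel_y.
  apply (lin4 _ _ _ _ (fun _ => 0)); auto.
  - intro s. unfold hankel_integrand. apply (shift_pt _ _ _ _ (gamma s)); auto.
  - apply is_cint_zero.
Qed.

Lemma ibp_lem (gamma dgamma L1 L2 : R -> C) a b a1 a2 b1 :
  (forall s, CD gamma s (dgamma s)) -> (forall s, continuous dgamma s) ->
  (forall s, continuous L1 s /\ cexp (L1 s) = gamma s) ->
  (forall s, continuous L2 s /\ cexp (L2 s) = /2 * (gamma s - / gamma s) + 1) ->
  filterlim (fun s => cexp (- a * L1 s) * cexp (b * L2 s)) (Rbar_locally m_infty) (locally (RtoC 0)) ->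
  filterlim (fun s => cexp (- a * L1 s) * cexp (b * L2 s)) (Rbar_locally p_infty) (locally (RtoC 0)) ->
  a1 = a - 1 -> a2 = a + 1 -> b1 = b - 1 ->
  ex_cint (hankel_integrand dgamma L1 L2 a b) ->
  ex_cint (hankel_integrand dgamma L1 L2 a1 b1) -> ex_cint (hankel_integrand dgamma L1 L2 a2 b1) ->
  -a * hankel_y dgamma L1 L2 a b + b/2 * hankel_y dgamma L1 L2 a1 b1
  + b/2 * hankel_y dgamma L1 L2 a2 b1 + 0 * hankel_y dgamma L1 L2 a b = 0.
Proof.
  intros Hg Hdc HL1 HL2 Hm Hp -> -> -> E1 E2 E3. unfold hankel_y.
  set (H := fun s => -a * hankel_integrand dgamma L1 L2 a b s + b/2 * hankel_integrand dgamma L1 L2 (a-1) (b-1) s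
     + b/2 * hankel_integrand dgamma L1 L2 (a+1) (b-1) s + 0 * hankel_integrand dgamma L1 L2 a b s).
  apply (lin4 _ _ _ _ H); auto.
  assert (Hgn : forall s, gamma s <> 0) by (intro s; rewrite <- (proj2 (HL1 s)); apply cexp_neq0).
  set (w := fun u => /2 * (gamma u - / gamma u) + 1).
  set (w' := fun u => /2 * (dgamma u - (- dgamma u / (gamma u * gamma u)))).
  assert (Hw : forall s, CD w s (w' s)).
  { intro s. unfold w, w'. eapply CD_eq.
    - apply (CD_plus (fun u => /2 * (gamma u - / gamma u)) (fun _ => 1)); [|apply CD_const].
      apply CD_cmult. apply CD_minus; [apply Hg|]. apply CD_inv; auto.
    - ring. }
  set (G := fun s => cexp (- a * L1 s + b * L2 s)).
  assert (HG : forall s, CD G s (H s)).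
  { intro s. unfold G. eapply CD_eq.
    - apply (CD_cexp (fun u => - a * L1 u + b * L2 u)).
      apply CD_plus; apply CD_cmult.
      + apply CD_log; [intro; apply HL1| apply (CC_of_cont L1 s (proj1 (HL1 s)))|apply Hg].
      + apply (CD_log w); [intro; apply HL2| apply (CC_of_cont L2 s (proj1 (HL2 s)))|apply Hw].
    - unfold H, hankel_integrand, w, w'. apply ibp_pt; [apply HL1|apply HL2]. }
  assert (HC : forall s, CC H s).
  { intro s. unfold H, hankel_integrand.
    assert (K : forall c1 c2, CC (fun u => cexp (c1 * L1 u) * cexp (c2 * L2 u) * dgamma u) s).
    { intros c1 c2. apply CC_mult; [apply CC_mult|apply CC_of_cont, Hdc]; apply CC_cexp;
      apply (CC_mult (fun _ => _)); try apply CC_const; apply CC_of_cont; [apply HL1|apply HL2]. }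
    repeat apply CC_plus; apply (CC_mult (fun _ => _)); try apply CC_const; apply K. }
  assert (HGm : filterlim G (Rbar_locally m_infty) (locally (RtoC 0))).
  { eapply filterlim_ext; [|exact Hm]. intro s. unfold G. rewrite cexp_add. reflexivity. }
  assert (HGp : filterlim G (Rbar_locally p_infty) (locally (RtoC 0))).
  { eapply filterlim_ext; [|exact Hp]. intro s. unfold G. rewrite cexp_add. reflexivity. }
  split.
  - apply (ftc_gen (fun s => Re (G s)) (fun s => Re (H s))).
    + intro s. apply (HG s).
    + intro s. apply (HC s).
    + exact (lim_re G _ HGm).
    + exact (lim_re G _ HGp).
  - apply (ftc_gen (fun s => Im (G s)) (fun s => Im (H s))).
    + intro s. apply (HG s).
    + intro s. apply (HC s).
    + exact (lim_im G _ HGm).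
    + exact (lim_im G _ HGp).
Qed.

Lemma div_bound (x N : R) : (0 < N)%R -> (Rabs x <= N)%R -> (Rabs (x / N) <= 1)%R.
Proof.
  intros HN Hx. unfold Rdiv. rewrite Rabs_mult, Rabs_inv, (Rabs_pos_eq N) by lra.
  apply (Rmult_le_reg_r N); auto. rewrite Rmult_assoc, Rinv_l by lra. lra.
Qed.

Lemma inv_bound z : (1 <= Re z)%R -> (Rabs (Re (/ z)) <= 1 /\ Rabs (Im (/ z)) <= 1)%R.
Proof.
  destruct z as [p q]; unfold Re, Im; simpl. intro Hp.
  assert (HN : (1 <= p ^ 2 + q ^ 2)%R) by nra.
  split; apply div_bound; try lra.
  - rewrite Rabs_pos_eq by lra. nra.
  - rewrite Rabs_Ropp. pose proof (Rabs_pos q). 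
    assert (Rabs q * Rabs q = q ^ 2)%R by (rewrite <- Rabs_mult; simpl; rewrite Rmult_1_r; apply Rabs_pos_eq; nra).
    nra.
Qed.

Lemma lim_mul_bounded (F0 K : R -> C) Fl {FF : Filter Fl} :
  filterlim F0 Fl (locally (RtoC 0)) ->
  Fl (fun s => Rabs (Re (K s)) <= 1 /\ Rabs (Im (K s)) <= 1)%R ->
  filterlim (fun s => F0 s * K s) Fl (locally (RtoC 0)).
Proof.
  intros H HK. apply filterlim_locally. intro eps.
  assert (He : (0 < eps / 2)%R) by (destruct eps; simpl; lra).
  pose proof (proj1 (filterlim_locally F0 (RtoC 0)) H (mkposreal _ He)) as H2.
  generalize (filter_and _ _ H2 HK). apply filter_imp. intros s [Hb [K1 K2]].
  destruct Hb as [B1 B2].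
  change (Rabs (fst (F0 s) + - 0) < eps / 2)%R in B1.
  change (Rabs (snd (F0 s) + - 0) < eps / 2)%R in B2.
  unfold Re, Im in K1, K2.
  split; [change (Rabs (fst ((F0 s * K s)%C) + - 0) < eps)%R | change (Rabs (snd ((F0 s * K s)%C) + - 0) < eps)%R];
  destruct (F0 s) as [f1 f2], (K s) as [k1 k2]; simpl in *;
  rewrite Ropp_0, Rplus_0_r in *.
  - unfold Rminus. eapply Rle_lt_trans; [apply Rabs_triang|]. rewrite Rabs_Ropp, !Rabs_mult.
    assert (Rabs f1 * Rabs k1 <= Rabs f1)%R by (pose proof (Rabs_pos f1); nra).
    assert (Rabs f2 * Rabs k2 <= Rabs f2)%R by (pose proof (Rabs_pos f2); nra).
    destruct eps; simpl in *; lra.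
  - eapply Rle_lt_trans; [apply Rabs_triang|]. rewrite !Rabs_mult.
    assert (Rabs f1 * Rabs k2 <= Rabs f1)%R by (pose proof (Rabs_pos f1); nra).
    assert (Rabs f2 * Rabs k1 <= Rabs f2)%R by (pose proof (Rabs_pos f2); nra).
    destruct eps; simpl in *; lra.
Qed.

Lemma re_w (g : C) : (1 <= Re g)%R -> (1 <= Re (/2 * (g - / g) + 1))%R.
Proof.
  destruct g as [p q]; unfold Re. intro Hp. simpl in Hp.
  assert (HN : (1 <= p ^ 2 + q ^ 2)%R) by nra.
  assert (E : fst (/2 * ((p, q) - / (p, q)) + 1) = ((p - p / (p ^ 2 + q ^ 2)) / 2 + 1)%R).
  { simpl. field. lra. }
  rewrite E.
  assert (p / (p ^ 2 + q ^ 2) <= p)%R.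
  { apply (Rmult_le_reg_r (p ^ 2 + q ^ 2)); [lra|]. unfold Rdiv. rewrite Rmult_assoc, Rinv_l by lra. nra. }
  lra.
Qed.

Lemma ev_re (gamma : R -> C) Fl {FF : Filter Fl} :
  filterlim (fun s => Re (gamma s)) Fl (Rbar_locally p_infty) ->
  Fl (fun s => 1 <= Re (gamma s) /\ 1 <= Re (/2 * (gamma s - / gamma s) + 1))%R.
Proof.
  intro H. assert (H1 : Fl (fun s => 1 < Re (gamma s))%R).
  { apply (H (fun y => 1 < y)%R). exists 1%R. auto. }
  revert H1. apply filter_imp. intros s Hs. split; [lra|]. apply re_w. lra.
Qed.

Lemma van_shift (gamma L1 L2 : R -> C) (nu x : C) Fl {FF : Filter Fl} :
  (forall s, cexp (L1 s) = gamma s) ->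
  (forall s, cexp (L2 s) = /2 * (gamma s - / gamma s) + 1) ->
  filterlim (fun s => Re (gamma s)) Fl (Rbar_locally p_infty) ->
  filterlim (fun s => cexp (- nu * L1 s) * cexp (x * L2 s)) Fl (locally (RtoC 0)) ->
  filterlim (fun s => cexp (- nu * L1 s) * cexp ((x - 1) * L2 s)) Fl (locally (RtoC 0)) /\
  filterlim (fun s => cexp (- (nu + 1) * L1 s) * cexp ((x - 1) * L2 s)) Fl (locally (RtoC 0)).
Proof.
  intros H1 H2 Hg HF.
  pose proof (ev_re gamma Fl Hg) as Hev.
  assert (V1 : filterlim (fun s => (cexp (- nu * L1 s) * cexp (x * L2 s)) * / (/2 * (gamma s - / gamma s) + 1)) Fl (locally (RtoC 0))).
  { apply lim_mul_bounded; auto. revert Hev. apply filter_imp. intros s [_ Hs]. apply inv_bound; auto. }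
  assert (E1 : forall s, cexp (- nu * L1 s) * cexp ((x - 1) * L2 s) = (cexp (- nu * L1 s) * cexp (x * L2 s)) * / (/2 * (gamma s - / gamma s) + 1)).
  { intro s. rewrite (cexp_split (x - 1) x (-1) (L2 s)) by ring. rewrite cexp_m1, H2. ring. }
  split.
  - eapply filterlim_ext; [|exact V1]. intro s. symmetry. apply E1.
  - assert (V2 : filterlim (fun s => ((cexp (- nu * L1 s) * cexp (x * L2 s)) * / (/2 * (gamma s - / gamma s) + 1)) * / gamma s) Fl (locally (RtoC 0))).
    { apply lim_mul_bounded; auto. revert Hev. apply filter_imp. intros s [Hs _]. apply inv_bound; auto. }
    eapply filterlim_ext; [|exact V2]. intro s. cbv beta.
    rewrite (cexp_split (- (nu + 1)) (- nu) (-1) (L1 s)) by ring. rewrite (cexp_split (x - 1) x (-1) (L2 s)) by ring. rewrite !cexp_m1, H1, H2. ring.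
Qed.

Lemma comb2 (g e1 e2 c1 c2 : C) : e1 = 0 -> e2 = 0 -> g = c1 * e1 + c2 * e2 -> g = 0.
Proof. intros -> -> ->. ring. Qed.

Lemma comb6 (g e1 e2 e3 e4 e5 e6 c1 c2 c3 c4 c5 c6 : C) :
  e1 = 0 -> e2 = 0 -> e3 = 0 -> e4 = 0 -> e5 = 0 -> e6 = 0 ->
  g = c1 * e1 + c2 * e2 + c3 * e3 + c4 * e4 + c5 * e5 + c6 * e6 -> g = 0.
Proof. intros -> -> -> -> -> -> ->. ring. Qed.

Ltac hi H := apply H; unfold Re; simpl; lra.

Theorem mainTheorem7 (gamma dgamma L1 L2 : R -> C) (nu x : C)
  (* U is a C^1 path *)
  (Hder : forall s, is_derive (fun u => Re (gamma u)) s (Re (dgamma s)) /\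
                    is_derive (fun u => Im (gamma u)) s (Im (dgamma s)))
  (Hdcont : forall s, continuous dgamma s)
  (* continuous branches of log t and log [(1/2)(t - 1/t) + 1] along U *)
  (HL1 : forall s, continuous L1 s /\ cexp (L1 s) = gamma s)
  (HL2 : forall s, continuous L2 s /\
                   cexp (L2 s) = / 2 * (gamma s - / gamma s) + 1)
  (* Hankel shape: both ends go to +infinity, U starts above the real axis,
     ends below it, and circles the origin once counterclockwise *)
  (Hinf : filterlim (fun s => Re (gamma s)) (Rbar_locally m_infty) (Rbar_locally p_infty) /\
          filterlim (fun s => Re (gamma s)) (Rbar_locally p_infty) (Rbar_locally p_infty))
  (Hshape : exists M : R, forall s : R, (M <= s)%R ->
              (0 < Im (gamma (- s)))%R /\ (Im (gamma s) < 0)%R /\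
              (0 < Im (L1 s) - Im (L1 (- s)) < 2 * PI)%R)
  (Hx : (Re x < Re nu)%R)
  (* t^{-nu} [(1/2)(t - 1/t) + 1]^x vanishes at the endpoints of U *)
  (Hvan : filterlim (fun s => cexp (- nu * L1 s) * cexp (x * L2 s))
            (Rbar_locally m_infty) (locally (RtoC 0)) /\
          filterlim (fun s => cexp (- nu * L1 s) * cexp (x * L2 s))
            (Rbar_locally p_infty) (locally (RtoC 0)))
  (* the defining contour integrals converge (for Re x' < Re nu') *)
  (Hint : forall nu' x' : C, (Re x' < Re nu')%R ->
            ex_cint (hankel_integrand dgamma L1 L2 nu' x')) :
  let y := hankel_y dgamma L1 L2 in
  (x * fwd_diff (y nu) (x - 1) + nu * y nu x - x * y (nu - 1) (x - 1) = 0 /\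
   x * fwd_diff (y nu) (x - 1) - nu * y nu x + x * y (nu + 1) (x - 1) = 0) /\
  x * (x - 1) * fwd_diff (fwd_diff (y nu)) (x - 2) + x * fwd_diff (y nu) (x - 1)
    + x * (x - 1) * y nu (x - 2) - nu * nu * y nu x = 0.
Proof.
  intro y. subst y.
  assert (Hg : forall s, CD gamma s (dgamma s)) by exact Hder.
  assert (H1 : forall s, cexp (L1 s) = gamma s) by (intro s; apply HL1).
  assert (H2 : forall s, cexp (L2 s) = /2 * (gamma s - / gamma s) + 1) by (intro s; apply HL2).
  destruct Hinf as [Hm Hp]. destruct Hvan as [Vm Vp].
  destruct (van_shift gamma L1 L2 nu x _ H1 H2 Hm Vm) as [Vm1 Vm2].
  destruct (van_shift gamma L1 L2 nu x _ H1 H2 Hp Vp) as [Vp1 Vp2].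
  unfold Re in Hx.
  assert (X00 : ex_cint (hankel_integrand dgamma L1 L2 nu x)) by hi Hint.
  assert (X01 : ex_cint (hankel_integrand dgamma L1 L2 nu (x - 1))) by hi Hint.
  assert (X02 : ex_cint (hankel_integrand dgamma L1 L2 nu (x - 2))) by hi Hint.
  assert (Xm1 : ex_cint (hankel_integrand dgamma L1 L2 (nu - 1) (x - 1))) by hi Hint.
  assert (Xm2 : ex_cint (hankel_integrand dgamma L1 L2 (nu - 1) (x - 2))) by hi Hint.
  assert (Xp1 : ex_cint (hankel_integrand dgamma L1 L2 (nu + 1) (x - 1))) by hi Hint.
  assert (Xp2 : ex_cint (hankel_integrand dgamma L1 L2 (nu + 1) (x - 2))) by hi Hint.
  assert (Xpp2 : ex_cint (hankel_integrand dgamma L1 L2 (nu + 1 + 1) (x - 2))) by hi Hint.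
  pose proof (shift_lem gamma dgamma L1 L2 nu x (nu - 1) (nu + 1) (x - 1) H1 H2
    eq_refl eq_refl eq_refl X00 X01 Xm1 Xp1) as S0.
  pose proof (shift_lem gamma dgamma L1 L2 nu (x - 1) (nu - 1) (nu + 1) (x - 2) H1 H2
    eq_refl eq_refl ltac:(ring) X01 X02 Xm2 Xp2) as S1.
  pose proof (shift_lem gamma dgamma L1 L2 (nu + 1) (x - 1) nu (nu + 1 + 1) (x - 2) H1 H2
    ltac:(ring) eq_refl ltac:(ring) Xp1 Xp2 X02 Xpp2) as S2.
  pose proof (ibp_lem gamma dgamma L1 L2 nu x (nu - 1) (nu + 1) (x - 1) Hg Hdcont HL1 HL2 Vm Vp
    eq_refl eq_refl eq_refl X00 Xm1 Xp1) as I0.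
  pose proof (ibp_lem gamma dgamma L1 L2 nu (x - 1) (nu - 1) (nu + 1) (x - 2) Hg Hdcont HL1 HL2 Vm1 Vp1
    eq_refl eq_refl ltac:(ring) X01 Xm2 Xp2) as I1.
  pose proof (ibp_lem gamma dgamma L1 L2 (nu + 1) (x - 1) nu (nu + 1 + 1) (x - 2) Hg Hdcont HL1 HL2 Vm2 Vp2
    ltac:(ring) eq_refl ltac:(ring) Xp1 X02 Xpp2) as I2.
  unfold fwd_diff.
  replace (x - 2 + 1 + 1) with x by ring.
  replace (x - 2 + 1) with (x - 1) by ring.
  replace (x - 1 + 1) with x by ring.
  split; [split|].
  - apply (comb2 _ _ _ x (-1) S0 I0). field.
  - apply (comb2 _ _ _ x 1 S0 I0). field.
  - apply (comb6 _ _ _ _ _ _ _ ((x + nu) * x) (x + nu) (- x * (x - 1)) (- x) (- x * (x - 1)) x S0 I0 S1 I1 S2 I2). field.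
Qed.
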